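(* Let $p$ be a prime, $k\ge 1$ and $n\ge 0$ integers, $\alpha_0,\dots,\alpha_{n-1}\in\mathbb{Z}_p$ and $r_0,\dots,r_{n-1}$ nonnegative integers, with $|r|=r_0+\cdots+r_{n-1}$. Define $$\check{D}_{n;\bar{\alpha},\bar{r}}^{(k)}=\int_{\mathbb{Z}_p}\cdots\int_{\mathbb{Z}_p}\prod_{i=0}^{n-1}(x_1x_2\cdots x_k-\alpha_i)^{r_i}\,d\mu_0(x_1)\cdots d\mu_0(x_k).$$ Then $$\check{D}_{n;\bar{\alpha},\bar{r}}^{(k)}=\sum_{m=0}^{|r|}s_{\bar{\alpha}}(n,m;\bar{r})\sum_{\ell_1=0}^{m}\cdots\sum_{\ell_k=0}^{m}\prod_{i=1}^{k}\frac{(-1)^{\ell_i}\,\ell_i!\,S(m,\ell_i)}{\ell_i+1}.$$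
   Context: For a polynomial (more generally uniformly differentiable) function $f:\mathbb{Z}_p\to\mathbb{C}_p$, the Volkenborn ($p$-adic invariant) integral is $\int_{\mathbb{Z}_p}f(x)\,d\mu_0(x)=\lim_{N\to\infty}p^{-N}\sum_{x=0}^{p^N-1}f(x)$; multiple integrals are iterated integrals in each variable. $S(m,\ell)$ are the Stirling numbers of the second kind, $x^m=\sum_{\ell=0}^m S(m,\ell)x(x-1)\cdots(x-\ell+1)$. The generalized Comtet numbers of the first kind $s_{\bar\alpha}(n,m;\bar r)$ are defined by $\prod_{i=0}^{n-1}(x-\alpha_i)^{r_i}=\sum_{m=0}^{|r|}s_{\bar\alpha}(n,m;\bar r)x^m$, where $\bar\alpha=(\alpha_0,\dots,\alpha_{n-1})$, $\bar r=(r_0,\dots,r_{n-1})$. *)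

(* Defs.v *)
From HB Require Import structures.
From mathcomp Require Import all_boot all_order all_algebra.
From mathcomp Require Import reals.
From Stdlib Require Import ClassicalEpsilon.
Set Implicit Arguments. Unset Strict Implicit. Unset Printing Implicit Defensive.
Import Order.TTheory GRing.Theory Num.Theory.
Local Open Scope ring_scope.

(* A (non-archimedean) p-adic absolute value on a field K: K together with a
   stands for C_p (or any valued field extending Q_p); the elements x with
   a x <= 1 play the role of the valuation ring (containing Z_p). *)
Record padic_abs (p : nat) (R : realType) (K : fieldType) (a : K -> R) : Prop := {
  pa_ge0 : forall x, 0 <= a x;
  pa_eq0 : forall x, a x = 0 <-> x = 0;
  pa_mul : forall x y, a (x * y) = a x * a y;
  pa_ultra : forall x y, a (x + y) <= Num.max (a x) (a y);
  pa_p : a (p%:R) = (p%:R)^-1 }.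

(* The Volkenborn integral of f (only its values at 0,1,2,... enter):
   L = lim_N p^{-N} sum_{x=0}^{p^N-1} f x, the limit w.r.t. a. *)
Definition has_volk (p : nat) (R : realType) (K : fieldType) (a : K -> R)
  (f : nat -> K) (L : K) : Prop :=
  forall eps : R, 0 < eps -> exists N0 : nat, forall N : nat, (N0 <= N)%N ->
    a (((p ^ N)%:R)^-1 * (\sum_(x < p ^ N) f x) - L) < eps.

Definition volk (p : nat) (R : realType) (K : fieldType) (a : K -> R)
  (f : nat -> K) : K :=
  epsilon (inhabits 0) (has_volk p a f).

Fixpoint mvolk (p : nat) (R : realType) (K : fieldType) (a : K -> R)
  (k : nat) (F : seq nat -> K) : K :=
  match k with
  | 0 => F [::]
  | k'.+1 => volk p a (fun x => mvolk p a k' (fun xs => F (x :: xs)))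
  end.

Fixpoint stirling2 (m l : nat) : nat :=
  match m, l with
  | 0, 0 => 1
  | 0, _.+1 => 0
  | _.+1, 0 => 0
  | m'.+1, l'.+1 => l'.+1 * stirling2 m' l'.+1 + stirling2 m' l'
  end.

Definition comtet1 (K : fieldType) (n : nat) (alpha : 'I_n -> K) (r : 'I_n -> nat)
  (m : nat) : K :=
  (\prod_(i < n) ('X - (alpha i)%:P) ^+ r i)`_m.

Definition integrand (K : fieldType) (n : nat) (alpha : 'I_n -> K) (r : 'I_n -> nat)
  (xs : seq nat) : K :=
  \prod_(i < n) ((\prod_(x <- xs) (x%:R : K)) - alpha i) ^+ r i.

(* Main.v *)
Require Import Defs.
From HB Require Import structures.
From mathcomp Require Import all_boot all_order all_algebra.
From mathcomp Require Import reals.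
From mathcomp Require Import zify ring lra.
From Stdlib Require Import ClassicalEpsilon FunctionalExtensionality.
Set Implicit Arguments. Unset Strict Implicit. Unset Printing Implicit Defensive.
Import Order.TTheory GRing.Theory Num.Theory.
Local Open Scope ring_scope.

Section Main.
Variables (p : nat) (R : realType) (K : fieldType) (a : K -> R).
Hypothesis pp : prime p.
Hypothesis ha : padic_abs p a.

Lemma a1 : a 1 = 1.
Proof.
have h := pa_mul ha 1 1; rewrite mulr1 in h.
have h0 : a 1 != 0 by apply/eqP => /(pa_eq0 ha) /eqP; rewrite oner_eq0.
by apply: (mulfI h0); rewrite mulr1 -h.
Qed.

Lemma aN1 : a (-1) = 1.
Proof.
have h := pa_mul ha (-1) (-1); rewrite mulrNN mulr1 a1 in h.
have h0 := pa_ge0 ha (-1).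
have : (a (-1) - 1) * (a (-1) + 1) = 0.
  have -> : (a (-1) - 1) * (a (-1) + 1) = a (-1) * a (-1) - 1 by ring.
  by rewrite h subrr.
move/eqP; rewrite mulf_eq0 => /orP [/eqP|/eqP]; first by move=> H; lra.
move=> H; lra.
Qed.

Lemma aN x : a (- x) = a x.
Proof. by rewrite -mulN1r (pa_mul ha) aN1 mul1r. Qed.

Lemma aX x n : a (x ^+ n) = a x ^+ n.
Proof. elim: n => [|n IH]; first by rewrite !expr0 a1. by rewrite !exprS (pa_mul ha) IH. Qed.

Lemma ultra_lt x y e : a x < e -> a y < e -> a (x + y) < e.
Proof.
move=> hx hy; apply: le_lt_trans (pa_ultra ha x y) _.
by rewrite /Num.max; case: ifP.
Qed.

Definition conv (u : nat -> K) (L : K) :=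
  forall eps : R, 0 < eps -> exists N0 : nat, forall N : nat, (N0 <= N)%N ->
    a (u N - L) < eps.

Lemma conv_ext u v L M : (forall N, u N = v N) -> L = M -> conv u L -> conv v M.
Proof. move=> huv <- h e he; have [N0 hN] := h e he; exists N0 => N hN'. by rewrite -huv; apply: hN. Qed.

Lemma conv_const c : conv (fun _ => c) c.
Proof. by move=> e he; exists 0%N => N _; rewrite subrr; have [_ ->] := pa_eq0 ha 0. Qed.

Lemma conv_add u v L M : conv u L -> conv v M -> conv (fun N => u N + v N) (L + M).
Proof.
move=> hu hv e he; have [N1 h1] := hu e he; have [N2 h2] := hv e he.
exists (maxn N1 N2) => N hN.
have -> : u N + v N - (L + M) = (u N - L) + (v N - M) by ring.
apply: ultra_lt; [apply: h1 | apply: h2]; lia.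
Qed.

Lemma conv_uniq u L M : conv u L -> conv u M -> L = M.
Proof.
move=> hL hM; apply/eqP; apply/negPn/negP => hne.
have hpos : 0 < a (L - M).
  rewrite lt_neqAle (pa_ge0 ha) andbT eq_sym; apply/negP => /eqP /(pa_eq0 ha) /eqP.
  by rewrite subr_eq0 (negbTE hne).
have [N1 h1] := hL _ hpos; have [N2 h2] := hM _ hpos.
have : a (L - M) < a (L - M).
  rewrite {1}(_ : L - M = - (u (maxn N1 N2) - L) + (u (maxn N1 N2) - M)); last by ring.
  apply: ultra_lt; first rewrite aN.
    by apply: h1; lia.
  by apply: h2; lia.
by rewrite ltxx.
Qed.

Lemma conv_mul u v L M : conv u L -> conv v M -> conv (fun N => u N * v N) (L * M).
Proof.
move=> hu hv e he.
set B := 1 + a L + a M.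
have hL := pa_ge0 ha L; have hM := pa_ge0 ha M.
have hB : 0 < B by rewrite /B; lra.
set e1 := Num.min 1 (e / B).
have he1 : 0 < e1 by rewrite /e1 lt_min ltr01 divr_gt0.
have e11 : e1 <= 1 by rewrite /e1 ge_min lexx.
have e1B : e1 * B <= e.
  rewrite /e1; have : e / B * B = e by rewrite divfK // gt_eqF.
  move=> h; rewrite -{2}h ler_wpM2r ?ge_min ?lexx ?orbT //; lra.
have [N1 h1] := hu e1 he1; have [N2 h2] := hv e1 he1.
exists (maxn N1 N2) => N hN.
have hN1 : (N1 <= N)%N by lia. have hN2 : (N2 <= N)%N by lia.
have H1 := h1 N hN1; have H2 := h2 N hN2.
have -> : u N * v N - L * M = u N * (v N - M) + (u N - L) * M by ring.
have hau : a (u N) <= B.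
  have -> : u N = (u N - L) + L by ring.
  apply: le_trans (pa_ultra ha _ _) _; rewrite /Num.max; case: ifP => _; rewrite /B; lra.
have g1 := pa_ge0 ha (u N); have g2 := pa_ge0 ha (v N - M); have g3 := pa_ge0 ha (u N - L).
apply: ultra_lt; rewrite (pa_mul ha).
- apply: le_lt_trans (_ : B * a (v N - M) < e).
    by rewrite ler_wpM2r.
  apply: lt_le_trans (_ : B * e1 <= e); last by rewrite mulrC.
  by rewrite ltr_pM2l.
- apply: le_lt_trans (_ : a (u N - L) * B < e).
    by rewrite ler_wpM2l // /B; lra.
  apply: lt_le_trans e1B; by rewrite ltr_pM2r.
Qed.

Lemma conv_sum (I : Type) (s : seq I) (F : I -> nat -> K) (L : I -> K) :
  (forall i, conv (F i) (L i)) ->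
  conv (fun N => \sum_(i <- s) F i N) (\sum_(i <- s) L i).
Proof.
move=> h; elim: s => [|i s IH].
  apply: conv_ext (conv_const 0) => [N|]; by rewrite big_nil.
apply: conv_ext (conv_add (h i) IH) => [N|]; by rewrite big_cons.
Qed.

Lemma conv_prod (I : Type) (s : seq I) (F : I -> nat -> K) (L : I -> K) :
  (forall i, conv (F i) (L i)) ->
  conv (fun N => \prod_(i <- s) F i N) (\prod_(i <- s) L i).
Proof.
move=> h; elim: s => [|i s IH].
  apply: conv_ext (conv_const 1) => [N|]; by rewrite big_nil.
apply: conv_ext (conv_mul (h i) IH) => [N|]; by rewrite big_cons.
Qed.

Lemma p_gt1 : (1 < p)%N. Proof. exact: prime_gt1. Qed.

Lemma conv_pN : conv (fun N => (p ^ N)%:R) 0.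
Proof.
move=> e he.
have hie : 0 <= e^-1 by rewrite invr_ge0 ltW.
have hb := archi_boundP hie.
exists (Num.Def.archi_bound e^-1) => N hN.
rewrite subr0 natrX aX (pa_p ha) exprVn -natrX.
have hp : (0 < p ^ N)%N by rewrite expn_gt0 prime_gt0.
rewrite -(invrK e) ltf_pV2 ?posrE ?ltr0n ?invr_gt0 //.
apply: lt_le_trans hb _; rewrite ler_nat.
apply: leq_trans hN _; apply: ltnW; apply: ltn_expl; exact: p_gt1.
Qed.


Lemma stirling_big m l : (m < l)%N -> stirling2 m l = 0%N.
Proof.
elim: m l => [|m IH] l hl; first by case: l hl.
case: l hl => [//|l] hl /=.
rewrite (IH l.+1) ?(IH l) //; lia.
Qed.

Lemma stirling_id x m N : (m < N)%N ->
  (x ^ m = \sum_(l < N) stirling2 m l * x ^_ l)%N.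
Proof.
elim: m N => [|m IH] N hN.
  case: N hN => // N _; rewrite big_ord_recl /= big1 ?ffactn0 // => i _.
case: N hN => // N hN.
rewrite expnS (IH N); last by lia.
rewrite big_distrr /= big_ord_recl /=.
rewrite mul0n add0n.
set g := fun l : nat => (l * stirling2 m l * x ^_ l)%N.
have e1 : (\sum_(i < N) x * (stirling2 m i * x ^_ i) =
  \sum_(i < N) stirling2 m i * x ^_ i.+1 + \sum_(i < N) g i)%N.
  rewrite -big_split /=; apply: eq_bigr => i _.
  rewrite /g ffactnSr.
  case: (leqP i x) => hix.
    have [d ->] : exists d, x = (d + i)%N by exists (x - i)%N; lia.
    rewrite addnK; nia.
  by rewrite ffact_small //; lia.
rewrite e1.
under [in RHS]eq_bigr => i _ do rewrite add0n /bump leq0n add1n mulnDl.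
rewrite big_split /= addnC; congr (_ + _)%N.
transitivity (\sum_(i < N.+1) g i)%N.
  have gN : g N = 0%N.
    by rewrite /g (@stirling_big m N) ?muln0 ?mul0n //; lia.
  by rewrite [in RHS]big_ord_recr /= gN addn0.
rewrite big_ord_recl /= {1}/g !mul0n add0n; apply: eq_bigr => i _.
by rewrite /g /bump leq0n add1n mulnA.
Qed.

Lemma hockey l M : (l.+1 * \sum_(x < M) x ^_ l = M ^_ l.+1)%N.
Proof.
elim: M => [|M IH]; first by rewrite big_ord0 muln0 ffact0n.
rewrite big_ord_recr /= mulnDr IH ffactSS ffactnSr.
case: (leqP l M) => hl.
  have [d ->] : exists d, M = (d + l)%N by exists (M - l)%N; lia.
  rewrite addnK; nia.
by rewrite ffact_small // !muln0 mul0n.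
Qed.

Lemma natr_ffact n l : (n ^_ l)%:R = \prod_(j < l) (n%:R - j%:R) :> K.
Proof.
elim: l => [|l IH]; first by rewrite ffactn0 big_ord0.
rewrite big_ord_recr /= -IH ffactnSr natrM.
case: (leqP l n) => hl; first by rewrite natrB.
by rewrite ffact_small // !mul0r.
Qed.

Lemma anat n : a n%:R <= 1.
Proof.
elim: n => [|n IH].
  have h0 : a 0 = 0 by apply/(pa_eq0 ha).
  by rewrite h0 ler01.
rewrite -addn1 natrD; apply: le_trans (pa_ultra ha _ _) _.
by rewrite a1 /Num.max; case: ifP.
Qed.

Lemma pK : p%:R != 0 :> K.
Proof.
apply/eqP => /(pa_eq0 ha) h; have := pa_p ha; rewrite h => /eqP.
by rewrite eq_sym invr_eq0 pnatr_eq0 gtn_eqF ?prime_gt0.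
Qed.

Lemma charK n : (0 < n)%N -> n%:R != 0 :> K.
Proof.
elim/ltn_ind: n => n IH hn.
case: (boolP (p %| n)%N) => hpn.
  have -> : n = (p * (n %/ p))%N by rewrite mulnC divnK.
  rewrite natrM mulf_neq0 ?pK //; apply: IH.
    rewrite ltn_Pdiv ?prime_gt1 //.
  by rewrite divn_gt0 ?prime_gt0 // dvdn_leq.
have cop : coprime n p by rewrite coprime_sym prime_coprime.
have [u _ hu] := Bezoutl p hn.
rewrite (eqP cop) in hu.
apply/eqP => h0.
have [c hc] := dvdnP hu.
have : (1 + u * p)%:R = 0 :> K by rewrite hc natrM h0 mulr0.
rewrite natrD natrM => /eqP; rewrite addr_eq0 => /eqP h1.
have := congr1 a h1; rewrite aN a1 (pa_mul ha) (pa_p ha) => h2.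
have h3 := anat u.
have hp : 1 < (p%:R : R) by rewrite ltr1n prime_gt1.
have hp0 : 0 < (p%:R : R) by lra.
have : (p%:R : R)^-1 < 1 by rewrite invf_lt1.
have := pa_ge0 ha u%:R.
have : 0 < (p%:R : R)^-1 by rewrite invr_gt0.
nra.
Qed.

Definition Bm (m : nat) : K := \sum_(j < m.+1)
  ((-1) ^+ j * (j`!)%:R * (stirling2 m j)%:R / (j.+1)%:R).

Lemma prodN l : \prod_(j < l) (0 - (j.+1)%:R : K) = (-1) ^+ l * (l`!)%:R.
Proof.
elim: l => [|l IH]; first by rewrite big_ord0 expr0 mul1r.
rewrite big_ord_recr /= IH factS natrM exprS; ring.
Qed.

Lemma sum_pow_eq m (P : nat) : (0 < P)%N ->
  (P%:R)^-1 * \sum_(x < P) (x%:R : K) ^+ m =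
  \sum_(l < m.+1) ((stirling2 m l)%:R / (l.+1)%:R) *
     \prod_(j < l) (P%:R - (j.+1)%:R).
Proof.
move=> hP.
have e1 : \sum_(x < P) (x%:R : K) ^+ m =
   \sum_(l < m.+1) (stirling2 m l)%:R * (\sum_(x < P) x ^_ l)%:R.
  under eq_bigr => x _ do rewrite -natrX (@stirling_id x m m.+1) // natr_sum.
  rewrite exchange_big /=; apply: eq_bigr => l _.
  by rewrite natr_sum mulr_sumr; apply: eq_bigr => x _; rewrite natrM.
rewrite e1 mulr_sumr; apply: eq_bigr => l _.
have hl : (l.+1)%:R != 0 :> K by apply: charK.
have e2 : (\sum_(x < P) x ^_ l)%:R = (P ^_ l.+1)%:R / (l.+1)%:R :> K.
  by rewrite -hockey natrM mulrAC divff // mul1r.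
rewrite e2 natr_ffact big_ord_recl /= subr0.
have hP0 : P%:R != 0 :> K by apply: charK.
under eq_bigr => j _ do rewrite /bump leq0n add1n.
field; rewrite hP0 andbT; move: hl; by rewrite -add1n natrD.
Qed.

Lemma has_volk_pow m : has_volk p a (fun x => (x%:R : K) ^+ m) (Bm m).
Proof.
have hP N : (0 < p ^ N)%N by rewrite expn_gt0 prime_gt0.
apply: (@conv_ext (fun N => \sum_(l < m.+1) ((stirling2 m l)%:R / (l.+1)%:R) *
     \prod_(j < l) ((p ^ N)%:R - (j.+1)%:R))).
- by move=> N; rewrite sum_pow_eq.
- reflexivity.
apply: (@conv_ext _ _ (\sum_(l < m.+1) ((stirling2 m l)%:R / (l.+1)%:R) *
     \prod_(j < l) (0 - (j.+1)%:R))) => //.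
  rewrite /Bm; apply: eq_bigr => l _; rewrite prodN; ring.
apply: conv_sum => l; apply: conv_mul; first exact: conv_const.
apply: conv_prod => j; apply: conv_add; first exact: conv_pN.
exact: conv_const.
Qed.

Lemma volk_eq f L : has_volk p a f L -> volk p a f = L.
Proof.
move=> h; rewrite /volk.
have ex : exists L, has_volk p a f L by exists L.
exact: (conv_uniq (epsilon_spec (inhabits 0) _ ex) h).
Qed.

Lemma has_volk_poly M (d : nat -> K) :
  has_volk p a (fun x => \sum_(m < M) d m * (x%:R : K) ^+ m)
    (\sum_(m < M) d m * Bm m).
Proof.
apply: (@conv_ext (fun N => \sum_(m < M) d m *
   (((p ^ N)%:R)^-1 * \sum_(x < p ^ N) (x%:R : K) ^+ m))) => //.
  move=> N; rewrite /= [in RHS]exchange_big /= [in RHS]mulr_sumr.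
  apply: eq_bigr => m _.
  by rewrite -mulr_sumr mulrCA.
apply: conv_sum => m; apply: conv_mul; first exact: conv_const.
exact: has_volk_pow.
Qed.

Definition Fc M (c : nat -> K) (xs : seq nat) :=
  \sum_(m < M) c m * \prod_(y <- xs) (y%:R : K) ^+ m.

Lemma has_volk_Fc_gen k M c :
  (forall M' c', mvolk p a k (Fc M' c') = \sum_(m < M') c' m * Bm m ^+ k) ->
  has_volk p a (fun x => mvolk p a k (fun xs => Fc M c (x :: xs)))
    (\sum_(m < M) c m * Bm m ^+ k.+1).
Proof.
move=> IH.
have -> : (fun x => mvolk p a k (fun xs => Fc M c (x :: xs))) =
   (fun x => \sum_(m < M) (c m * Bm m ^+ k) * (x%:R : K) ^+ m).
  apply: functional_extensionality => x.
  have -> : (fun xs => Fc M c (x :: xs)) = Fc M (fun m => c m * (x%:R : K) ^+ m).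
    apply: functional_extensionality => xs; rewrite /Fc; apply: eq_bigr => m _.
    by rewrite big_cons mulrA.
  by rewrite IH; apply: eq_bigr => m _; ring.
have := has_volk_poly M (fun m => c m * Bm m ^+ k).
congr has_volk; apply: eq_bigr => m _; rewrite exprS; ring.
Qed.

Lemma mvolk_Fc k : forall M c, mvolk p a k (Fc M c) = \sum_(m < M) c m * Bm m ^+ k.
Proof.
elim: k => [|k IH] M c.
  by rewrite /= /Fc; apply: eq_bigr => m _; rewrite big_nil expr0.
exact: volk_eq (has_volk_Fc_gen M c IH).
Qed.

Lemma has_volk_Fc k M c :
  has_volk p a (fun x => mvolk p a k (fun xs => Fc M c (x :: xs)))
    (\sum_(m < M) c m * Bm m ^+ k.+1).
Proof. exact: has_volk_Fc_gen (mvolk_Fc k). Qed.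

Lemma integrand_Fc n (alpha : 'I_n -> K) (r : 'I_n -> nat) :
  integrand alpha r = Fc (\sum_(i < n) r i).+1 (comtet1 alpha r).
Proof.
apply: functional_extensionality => xs.
set Q := \prod_(i < n) ('X - (alpha i)%:P) ^+ r i.
have -> : integrand alpha r xs = Q.[\prod_(y <- xs) (y%:R : K)].
  rewrite /integrand /Q horner_prod; apply: eq_bigr => i _.
  by rewrite horner_exp hornerXsubC.
rewrite (@horner_coef_wide _ (\sum_(i < n) r i).+1).
  by rewrite /Fc; apply: eq_bigr => m _; rewrite prodrXl.
apply: leq_trans (size_poly_prod_leq _ _) _.
under eq_bigr => i _ do rewrite size_exp_XsubC.
have -> : (\sum_(i < n) (r i).+1 = \sum_(i < n) r i + \sum_(i < n) 1)%N.
  by rewrite -big_split /=; apply: eq_bigr => i _; rewrite addn1.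
rewrite sum1_card card_ord; lia.
Qed.

Lemma ffun_sum m k (G : nat -> K) :
  \sum_(l : {ffun 'I_k -> 'I_m.+1}) \prod_(i < k) G (l i) =
  (\sum_(j < m.+1) G j) ^+ k.
Proof.
rewrite -(bigA_distr_bigA (fun (i : 'I_k) (j : 'I_m.+1) => G j)) /=.
by rewrite prodr_const card_ord.
Qed.

End Main.

Unset Implicit Arguments.
Set Strict Implicit.

Theorem theorem2p2 (p : nat) (R : realType) (K : fieldType) (a : K -> R)
  (k n : nat) (alpha : 'I_n -> K) (r : 'I_n -> nat) :
  prime p -> padic_abs p a -> (1 <= k)%N ->
  (forall i, a (alpha i) <= 1) ->
  let D := \sum_(m < (\sum_(i < n) r i).+1)
             comtet1 alpha r m *
             \sum_(l : {ffun 'I_k -> 'I_m.+1})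
               \prod_(i < k)
                 ((-1) ^+ (l i) * ((l i)`!)%:R * (stirling2 m (l i))%:R
                  / ((l i).+1)%:R) in
  has_volk p a (fun x1 => mvolk p a k.-1 (fun xs => integrand alpha r (x1 :: xs))) D
  /\ mvolk p a k (integrand alpha r) = D.
Proof.
move=> pp ha hk _ D.
have eD : D = \sum_(m < (\sum_(i < n) r i).+1) comtet1 alpha r m * @Bm K m ^+ k.
  rewrite /D; apply: eq_bigr => m _; congr (_ * _).
  exact: (@ffun_sum K m k (fun j => (-1) ^+ j * (j`!)%:R * (stirling2 m j)%:R / (j.+1)%:R)).
rewrite eD (integrand_Fc pp); case: k hk {D eD} => // k _ /=; split.
  exact: has_volk_Fc.
exact: (mvolk_Fc pp ha k.+1).
Qed.
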